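(* Let $\Gamma$ be a Deza graph with parameters $(n,k,k-1,a)$, $k>1$, $\beta=1$, and let $\Gamma''$ be the graph defined below. Then $\Gamma''$ is a Deza graph with parameters $(\frac{n}{2},\frac{k-1}{2},\frac{a}{2},\frac{a-2}{2})$. More precisely, for two distinct vertices $\{x,x_b\}$ and $\{y,y_b\}$ of $\Gamma''$, call the pair special if $x$ and $y$ are $NA$-vertices, $\{x',x_b'\}\ne\{y,y_b\}$, and there are exactly $8$ edges of $\Gamma$ between $\{x,x',x_b,x_b'\}$ and $\{y,y',y_b,y_b'\}$. If the two vertices are adjacent in $\Gamma''$, they have $\frac{a}{2}$ common neighbours in $\Gamma''$ if the pair is special and $\frac{a-2}{2}$ otherwise; if they are non-adjacent, they have $\frac{a-2}{2}$ common neighbours if the pair is special and $\frac{a}{2}$ otherwise.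
   Context: A Deza graph with parameters $(n,k,b,a)$, $a\le b$, is a $k$-regular graph on $n$ vertices in which any two distinct vertices have $a$ or $b$ common neighbours; $\beta$ is the number of vertices $u\ne v$ with exactly $b$ common neighbours with a given vertex $v$. Since $\beta=1$, for each vertex $x$ let $x_b$ denote the unique vertex having $b=k-1$ common neighbours with $x$. A vertex $x$ is an $A$-vertex if $x$ is adjacent to $x_b$, and an $NA$-vertex otherwise. For an $NA$-vertex $x$, $x'$ denotes the unique neighbour of $x$ not adjacent to $x_b$, and $x_b'=(x')_b=(x_b)'$. Let $\Gamma'$ be obtained from $\Gamma$ by removing all edges $\{x,x_b\}$ with $x$ an $A$-vertex and all edges $\{x,x'\}$ with $x$ an $NA$-vertex. Let $\Gamma''$ be the graph whose vertices are the pairs $\{x,x_b\}$, two distinct pairs $\{x,x_b\}$ and $\{y,y_b\}$ being adjacent iff all four edges between them are present in $\Gamma'$. *)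

(* Defs.v *)
From mathcomp Require Import all_boot.
Set Implicit Arguments. Unset Strict Implicit. Unset Printing Implicit Defensive.

(* A simple graph is a symmetric irreflexive relation e on a finType T. *)
Section DezaDefs.
Variables (T : finType) (e : rel T) (b : nat).

Definition cn (x y : T) : nat := #|[set z | e x z && e y z]|.

(* x_b : the (unique, under beta = 1) vertex u <> x having b common
   neighbours with x; default x if none exists *)
Definition xb (x : T) : T := odflt x [pick y | (y != x) && (cn x y == b)].

Definition isA (x : T) : bool := e x (xb x).

Definition xpr (x : T) : T := odflt x [pick y | e x y && ~~ e (xb x) y].

Definition xbpr (x : T) : T := xpr (xb x).

Definition removed (u v : T) : bool :=
  (isA u && (v == xb u)) || (~~ isA u && (v == xpr u)).

Definition e1 (u v : T) : bool := [&& e u v, ~~ removed u v & ~~ removed v u].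

Definition V2 : {set {set T}} := [set [set x; xb x] | x : T].

Definition adj2 (P Q : {set T}) : bool :=
  (P != Q) && [forall u in P, forall v in Q, e1 u v].

Definition deg2 (P : {set T}) : nat := #|[set R in V2 | adj2 P R]|.

Definition cn2 (P Q : {set T}) : nat := #|[set R in V2 | adj2 P R && adj2 Q R]|.

Definition nedges (S1 S2 : {set T}) : nat :=
  #|[set p in setX S1 S2 | e p.1 p.2]|.

Definition special (x y : T) : bool :=
  [&& ~~ isA x, ~~ isA y,
      [set xpr x; xbpr x] != [set y; xb y] &
      nedges [set x; xpr x; xb x; xbpr x] [set y; xpr y; xb y; xbpr y] == 8].

End DezaDefs.

(* Main.v *)
Require Import Defs.
From mathcomp Require Import all_boot zify.
From Stdlib Require Import Lia.
Set Implicit Arguments. Unset Strict Implicit. Unset Printing Implicit Defensive.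

Section Proof.
Variables (T : finType) (e : rel T) (k a : nat).
Hypotheses (esy : symmetric e) (eirr : irreflexive e) (k1 : 1 < k)
  (reg : forall x : T, #|[set y | e x y]| = k)
  (cnab : forall x y : T, x != y -> cn e x y = a \/ cn e x y = k.-1)
  (ub : forall x : T, #|[set y | (y != x) && (cn e x y == k.-1)]| = 1).

Local Notation b := k.-1.
Local Notation beta := (xb e b).
Local Notation p := (xpr e b).
Local Notation C := (cn e).

Lemma cnC x y : C x y = C y x.
Proof. by rewrite /cn; apply: eq_card => z; rewrite !inE andbC. Qed.

Lemma beta_spec x : (beta x != x) && (C x (beta x) == b).
Proof.
rewrite /xb; case: pickP => [y //|H].
have /cards1P [z Hz] := introT eqP (ub x).
have : z \in [set y | (y != x) && (C x y == b)] by rewrite Hz set11.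
by rewrite inE H.
Qed.

Lemma beta_uniq x y : y != x -> C x y = b -> y = beta x.
Proof.
move=> H1 H2.
have /cards1P [z Hz] := introT eqP (ub x).
have : y \in [set y | (y != x) && (C x y == b)] by rewrite inE H1 H2 eqxx.
have : beta x \in [set y | (y != x) && (C x y == b)] by rewrite inE beta_spec.
by rewrite Hz !inE => /eqP -> /eqP ->.
Qed.

Lemma beta_neq x : beta x != x.
Proof. by case/andP: (beta_spec x). Qed.

Lemma cn_beta x : C x (beta x) = b.
Proof. by case/andP: (beta_spec x) => _ /eqP. Qed.

Lemma betaK x : beta (beta x) = x.
Proof.
apply/esym/beta_uniq; first by rewrite eq_sym beta_neq.
by rewrite cnC cn_beta.
Qed.

Lemma cn_a x y : y != x -> y != beta x -> C x y = a.
Proof.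
move=> H1 H2; case: (cnab (x:=x) (y:=y)); rewrite 1?eq_sym // => H.
by move/eqP: H2; case; apply: beta_uniq.
Qed.

Lemma diff1 x : #|[set y | e x y] :\: [set y | e (beta x) y]| = 1.
Proof.
have := cardsID [set y | e (beta x) y] [set y | e x y].
have -> : [set y | e x y] :&: [set y | e (beta x) y] = [set y | e x y && e (beta x) y].
  by apply/setP => z; rewrite !inE.
rewrite reg => H; have hc := cn_beta x; rewrite /cn in hc; rewrite hc in H.
apply: (@addnI b); rewrite H addn1 prednK //; exact: ltnW.
Qed.

Lemma p_spec x : e x (p x) && ~~ e (beta x) (p x).
Proof.
rewrite /xpr; case: pickP => [y //|H].
have /cards1P [z Hz] := introT eqP (diff1 x).
have : z \in [set y | e x y] :\: [set y | e (beta x) y] by rewrite Hz set11.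
by rewrite !inE andbC H.
Qed.

Lemma p_uniq x y : e x y -> ~~ e (beta x) y -> y = p x.
Proof.
move=> H1 H2.
have /cards1P [z Hz] := introT eqP (diff1 x).
have : y \in [set y | e x y] :\: [set y | e (beta x) y] by rewrite !inE H1 H2.
have : p x \in [set y | e x y] :\: [set y | e (beta x) y] by rewrite !inE andbC p_spec.
by rewrite Hz !inE => /eqP -> /eqP ->.
Qed.

Lemma e_p x : e x (p x). Proof. by case/andP: (p_spec x). Qed.
Lemma ne_p x : ~~ e (beta x) (p x). Proof. by case/andP: (p_spec x). Qed.
Lemma ne_pb x : ~~ e x (p (beta x)).
Proof. by have := ne_p (beta x); rewrite betaK. Qed.

Lemma L x z : e x z -> z != p x -> e (beta x) z.
Proof. by move=> H1 H2; apply/negPn/negP => H3; move/eqP: H2; apply; apply: p_uniq. Qed.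

Lemma pA x : isA e b x -> p x = beta x.
Proof. by move=> H; apply/esym/p_uniq => //; rewrite eirr. Qed.

Lemma isA_beta x : isA e b (beta x) = isA e b x.
Proof. by rewrite /isA betaK esy. Qed.


Lemma p_neq x : p x != x.
Proof. by apply/eqP => H; have := e_p x; rewrite H eirr. Qed.

Lemma Gsplit x w : C x w = #|[set z | [&& e x z, e (beta x) z & e w z]]| + e w (p x).
Proof.
rewrite /cn -(cardsID [set p x] [set z | e x z && e w z]) addnC; congr (_ + _).
  apply: eq_card => z; rewrite !inE.
  case: (z =P p x) => [->|ne] /=; first by rewrite (negbTE (ne_p x)) andbF.
  case ex: (e x z) => //=; by rewrite (L ex) //; apply/eqP.
case h: (e w (p x)).
  have -> : [set z | e x z && e w z] :&: [set p x] = [set p x].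
    by apply/setP => z; rewrite !inE; case: (z =P p x) => [->|]; [rewrite e_p h | rewrite andbF].
  by rewrite cards1.
have -> : [set z | e x z && e w z] :&: [set p x] = set0.
  by apply/setP => z; rewrite !inE; case: (z =P p x) => [->|]; [rewrite h andbF | rewrite andbF].
by rewrite cards0.
Qed.

Lemma Pprin x w : w != x -> w != beta x -> e (p x) w = e (p (beta x)) w.
Proof.
move=> H1 H2.
have h1 := Gsplit x w; have h2 := Gsplit (beta x) w; rewrite betaK in h2.
rewrite cn_a // in h1; rewrite cn_a ?betaK // in h2.
have hs : #|[set z | [&& e x z, e (beta x) z & e w z]]| = #|[set z | [&& e (beta x) z, e x z & e w z]]|.
  by apply: eq_card => z; rewrite !inE andbA [e x z && _]andbC -andbA.
rewrite h1 hs in h2; move/addnI: h2.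
by rewrite ![e _ w]esy; case: (e w (p x)); case: (e w (p (beta x))).
Qed.

Lemma beta_p_p x : (beta (p x) = p (beta x)) /\ (p (p x) = x).
Proof.
case hA: (isA e b x).
  have hA' : isA e b (beta x) by rewrite isA_beta.
  by rewrite (pA hA) (pA hA') betaK.
set y := p x; set y' := p (beta x).
have hy : e x y := e_p x.
have hy' : ~~ e x y' := ne_pb x.
have hyb : ~~ e y (beta x) by rewrite esy; exact: ne_p.
have hyy : y' != y by apply/eqP => E; move: hy'; rewrite E hy.
have cnyy : C y y' = b.
  rewrite /cn.
  have -> : [set z | e y z && e y' z] = [set z | e y z] :\ x.
    apply/setP => z; rewrite !inE.
    case: (z =P x) => [->|nx] /=; first by rewrite [e y' x]esy (negbTE hy') andbF.
    case: (z =P beta x) => [->|nb]; first by rewrite (negbTE hyb).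
    by rewrite -Pprin ?andbb //; apply/eqP.
  have := cardsD1 x [set z | e y z]; rewrite reg inE esy hy /= => ->.
  by rewrite add1n.
have Eb : y' = beta y by apply: beta_uniq.
split; first by rewrite -Eb.
apply/esym/p_uniq; first by rewrite esy.
by rewrite -Eb esy.
Qed.

Lemma beta_p x : beta (p x) = p (beta x). Proof. by case: (beta_p_p x). Qed.
Lemma pK x : p (p x) = x. Proof. by case: (beta_p_p x). Qed.

Local Notation pr x := [set x; beta x].
Definition E1 u v := e u v && (v != p u).

Lemma pr_beta x : pr (beta x) = pr x.
Proof. by rewrite betaK setUC. Qed.

Lemma pr_eq x y : (pr x == pr y) = (y \in pr x).
Proof.
apply/eqP/idP => [->|]; first by rewrite set21.
by rewrite !inE => /orP [] /eqP ->; rewrite ?pr_beta.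
Qed.

Lemma p_eq u v : (u == p v) = (v == p u).
Proof. by apply/eqP/eqP => ->; rewrite pK. Qed.

Lemma e1E u v : e1 e b u v = E1 u v.
Proof.
have rE : forall u v, removed e b u v = (v == p u).
  move=> u' v'; rewrite /removed; case h: (isA e b u') => /=; last by [].
  by rewrite (pA h) orbF.
by rewrite /e1 !rE /E1 p_eq andbb.
Qed.

Lemma E1C u v : E1 u v = E1 v u.
Proof. by rewrite /E1 esy p_eq. Qed.

Lemma E1_beta1 x z : E1 x z -> E1 (beta x) z.
Proof.
case/andP => h1 h2; rewrite /E1 (L h1 h2) /=.
by apply/eqP => E; move: (ne_pb x); rewrite -E h1.
Qed.

Lemma E1_beta x z : E1 (beta x) z = E1 x z.
Proof.
apply/idP/idP; last exact: E1_beta1.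
by move/E1_beta1; rewrite betaK.
Qed.

Lemma E1_beta_r x z : E1 x (beta z) = E1 x z.
Proof. by rewrite E1C E1_beta E1C. Qed.

Lemma E1_pr u v x y : u \in pr x -> v \in pr y -> E1 u v = E1 x y.
Proof.
rewrite !inE => /orP [] /eqP -> /orP [] /eqP ->;
by rewrite ?E1_beta // E1C ?E1_beta // E1C.
Qed.

Lemma E1xx x : E1 x x = false.
Proof. by rewrite /E1 eirr. Qed.

Lemma E1xb x : E1 x (beta x) = false.
Proof.
rewrite /E1; case h: (e x (beta x)) => //=.
by rewrite (pA h) eqxx.
Qed.

Lemma E1_notpr x z : E1 x z -> z \notin pr x.
Proof. by move=> h; rewrite !inE; apply/negP => /orP [] /eqP E; move: h; rewrite E ?E1xx ?E1xb. Qed.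

Lemma adj2E x y : adj2 e b (pr x) (pr y) = (pr x != pr y) && E1 x y.
Proof.
rewrite /adj2; apply/idP/idP.
  case/andP => -> /forall_inP H /=.
  by have /forall_inP /(_ y (set21 _ _)) := H x (set21 _ _); rewrite e1E.
case/andP => -> h /=; apply/forall_inP => u hu; apply/forall_inP => v hv.
by rewrite e1E (E1_pr hu hv).
Qed.

Lemma count_pairs (S : {set T}) : (forall z, z \in S -> beta z \in S) ->
  #|S| = 2 * #|[set pr z | z in S]|.
Proof.
move=> cl.
rewrite (card_partition (preim_partitionP (fun z => pr z) S)).
have -> : preim_partition (fun z => pr z) S = [set pr z | z in S].
  rewrite /preim_partition /equivalence_partition; apply: eq_in_imset => z zS.
  apply/setP => y; rewrite inE pr_eq.
  case hy: (y \in pr z); last by rewrite andbF.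
  move: hy; rewrite !inE => /orP [] /eqP ->; by rewrite ?zS ?cl.
rewrite (eq_bigr (fun _ => 2)); first by rewrite sum_nat_const mulnC.
move=> A /imsetP [z _ ->]; by rewrite cards2 eq_sym beta_neq.
Qed.

Lemma V2E : V2 e b = [set pr z | z in [set: T]].
Proof. by apply/setP => P; apply/imsetP/imsetP => [[z _ ->]|[z _ ->]]; exists z. Qed.

Lemma clause1 : 2 * #|V2 e b| = #|T|.
Proof. by rewrite V2E -count_pairs ?cardsT // => z; rewrite inE. Qed.

Lemma clause2 P : P \in V2 e b -> 2 * deg2 e b P = b.
Proof.
case/imsetP => x _ ->; rewrite /deg2.
have -> : [set R in V2 e b | adj2 e b (pr x) R] = [set pr z | z in [set z | E1 x z]].
  apply/setP => R; rewrite inE; apply/andP/imsetP.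
    case=> /imsetP [z _ ->]; rewrite adj2E => /andP [_ h].
    by exists z; rewrite ?inE.
  case=> z; rewrite inE => h ->; split; first by apply/imsetP; exists z.
  by rewrite adj2E h andbT pr_eq E1_notpr.
rewrite -count_pairs; last by move=> z; rewrite !inE !E1_beta_r.
have -> : [set z | E1 x z] = [set z | e x z] :\ p x.
  by apply/setP => z; rewrite !inE /E1 andbC.
have h := cardsD1 (p x) [set z | e x z]; rewrite reg inE e_p in h.
by rewrite [in RHS]h add1n.
Qed.

Lemma card2I (A : {set T}) u v : u != v -> #|A :&: [set u; v]| = (u \in A) + (v \in A).
Proof.
move=> uv.
have hvu : (v == u) = false by apply/negbTE; rewrite eq_sym.
case hu: (u \in A); case hv: (v \in A).
- have -> : A :&: [set u; v] = [set u; v] by apply/setP => z; rewrite !inE; case: (eqVneq z u) => [Eu|nu]; case: (eqVneq z v) => [Ev|nv]; rewrite ?Eu ?Ev ?hu ?hv ?hvu ?eqxx ?andbT ?andbF ?orbT ?orbF //; by move: uv; rewrite -Eu -Ev eqxx.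
  by rewrite cards2 uv.
- have -> : A :&: [set u; v] = [set u] by apply/setP => z; rewrite !inE; case: (eqVneq z u) => [Eu|nu]; case: (eqVneq z v) => [Ev|nv]; rewrite ?Eu ?Ev ?hu ?hv ?hvu ?eqxx ?andbT ?andbF ?orbT ?orbF //; by move: uv; rewrite -Eu -Ev eqxx.
  by rewrite cards1.
- have -> : A :&: [set u; v] = [set v] by apply/setP => z; rewrite !inE; case: (eqVneq z u) => [Eu|nu]; case: (eqVneq z v) => [Ev|nv]; rewrite ?Eu ?Ev ?hu ?hv ?hvu ?eqxx ?andbT ?andbF ?orbT ?orbF //; by move: uv; rewrite -Eu -Ev eqxx.
  by rewrite cards1.
- have -> : A :&: [set u; v] = set0 by apply/setP => z; rewrite !inE; case: (eqVneq z u) => [Eu|nu]; case: (eqVneq z v) => [Ev|nv]; rewrite ?Eu ?Ev ?hu ?hv ?hvu ?eqxx ?andbT ?andbF ?orbT ?orbF //; by move: uv; rewrite -Eu -Ev eqxx.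
  by rewrite cards0.
Qed.

Lemma cn2E x y : pr x != pr y -> 2 * cn2 e b (pr x) (pr y) + (e y (p x) + e x (p y)) = a.
Proof.
move=> ne.
have nyx : y \notin pr x by rewrite -pr_eq.
have hxy : C x y = a.
  by apply: cn_a; apply/negP => /eqP E; move: nyx; rewrite E !inE eqxx ?orbT.
rewrite /cn2.
have -> : [set R in V2 e b | adj2 e b (pr x) R && adj2 e b (pr y) R]
      = [set pr z | z in [set z | E1 x z && E1 y z]].
  apply/setP => R; rewrite inE; apply/andP/imsetP.
    case=> /imsetP [z _ ->]; rewrite !adj2E => /andP [/andP [_ h1] /andP [_ h2]].
    by exists z; rewrite ?inE ?h1.
  case=> z; rewrite inE => /andP [h1 h2] ->; split; first by apply/imsetP; exists z.
  by rewrite !adj2E h1 h2 !andbT !pr_eq !E1_notpr.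
rewrite -count_pairs; last by move=> z; rewrite !inE !E1_beta_r.
rewrite -hxy /cn -(cardsID [set p x; p y] [set z | e x z && e y z]) [in RHS]addnC.
have pxy : p x != p y.
  apply/eqP => E; move: ne; rewrite -(pK x) E pK eqxx //.
rewrite card2I // !inE (e_p x) (e_p y) andbT /= [e y (p x)]esy.
congr (_ + _); apply: eq_card => z; rewrite !inE /E1 negb_or.
by case: (e x z); case: (e y z); case: (z == p x); case: (z == p y).
Qed.

Lemma A_adj x y : isA e b x -> y \notin pr x -> e (beta x) y = e x y.
Proof.
move=> hA; rewrite !inE negb_or => /andP [n1 n2].
apply/idP/idP => h.
  have hA' : isA e b (beta x) by rewrite isA_beta.
  by have := L h; rewrite (pA hA') betaK; apply.
by apply: L h _; rewrite (pA hA).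
Qed.

Lemma NA_pr x : ~~ isA e b x -> pr x != pr (p x).
Proof.
move=> hA; rewrite pr_eq !inE negb_or p_neq /=.
by apply/eqP => E; move: hA; rewrite /isA -E e_p.
Qed.

Lemma NA_even x : ~~ isA e b x -> ~~ odd a.
Proof.
move=> hA; have := cn2E (NA_pr hA); rewrite pK !eirr addn0 => <-.
by rewrite oddM.
Qed.

Lemma a_even x y : pr x != pr y -> ~~ odd a.
Proof.
move=> ne.
case hx: (isA e b x); last by apply: (@NA_even x); rewrite hx.
case hy: (isA e b y); last by apply: (@NA_even y); rewrite hy.
have := cn2E ne; rewrite (pA hx) (pA hy) esy A_adj -?pr_eq //.
rewrite [e x (beta y)]esy A_adj -?pr_eq 1?eq_sym // [e y x]esy addnn -muln2 => <-.
by rewrite oddD !oddM /= andbF.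
Qed.

Lemma D02 x y : pr x != pr y ->
  (e y (p x) + e x (p y) = 0) \/ (e y (p x) + e x (p y) = 2).
Proof.
move=> ne; have H := cn2E ne; have ev := a_even ne; rewrite -H oddD oddM /= in ev.
by move: ev; case: (e y (p x)); case: (e x (p y)); auto.
Qed.

Lemma sum4 (F : T -> nat) a1 a2 a3 a4 :
  a1 != a2 -> a1 != a3 -> a1 != a4 -> a2 != a3 -> a2 != a4 -> a3 != a4 ->
  \sum_(u in [set a1; a2; a3; a4]) F u = F a1 + F a2 + F a3 + F a4.
Proof.
move=> h12 h13 h14 h23 h24 h34.
have -> : [set a1; a2; a3; a4] = a1 |: (a2 |: (a3 |: [set a4])).
  by apply/setP => z; rewrite !inE !orbA.
rewrite big_setU1; last by rewrite !inE !negb_or h12 h13 h14.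
rewrite big_setU1; last by rewrite !inE !negb_or h23 h24.
rewrite big_setU1; last by rewrite !inE h34.
by rewrite big_set1 /= !addnA.
Qed.

Lemma nedges_sum (S1 S2 : {set T}) :
  nedges e S1 S2 = \sum_(u in S1) \sum_(v in S2) e u v.
Proof.
rewrite /nedges -sum1_card.
rewrite (eq_bigl (fun q => (q.1 \in S1) && ((q.2 \in S2) && e q.1 q.2))); last first.
  by move=> [u v]; rewrite !inE /= andbA.
rewrite -(pair_big_dep (fun u => u \in S1) (fun u v => (v \in S2) && e u v) (fun _ _ => 1)).
apply: eq_bigr => u _; rewrite big_mkcondr /=; apply: eq_bigr => v _.
by case: (e u v).
Qed.

Lemma pr_p_eq u w : (pr (p u) == pr (p w)) = (pr u == pr w).
Proof. by rewrite !pr_eq !inE beta_p !(inj_eq (can_inj pK)). Qed.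

Lemma dist4 u w : pr u != pr w ->
  [/\ u != w, u != beta w, beta u != w & beta u != beta w].
Proof.
rewrite pr_eq !inE negb_or => /andP [h1 h2]; split.
- by rewrite eq_sym.
- by apply: contra h2 => /eqP ->; rewrite betaK.
- by rewrite eq_sym.
- by rewrite (inj_eq (can_inj betaK)) eq_sym.
Qed.

Lemma eE u v : pr (p u) != pr v -> e u v = E1 u v.
Proof.
move=> h; rewrite /E1; case: (v =P p u) => [E|]; last by rewrite andbT.
by move: h; rewrite E eqxx.
Qed.

Lemma pr_mem u w : u \in pr w -> pr u = pr w.
Proof. by rewrite !inE => /orP [] /eqP ->; rewrite ?pr_beta. Qed.

Lemma nedgesE x y : ~~ isA e b x -> ~~ isA e b y -> pr x != pr y -> pr (p x) != pr y ->
  nedges e [set x; p x; beta x; beta (p x)] [set y; p y; beta y; beta (p y)]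
  = 4 * (e x y + e x (p y) + e (p x) y + e (p x) (p y)).
Proof.
move=> hx hy ne1 ne2.
have ne3 : pr x != pr (p y) by rewrite -pr_p_eq pK.
have ne4 : pr (p x) != pr (p y) by rewrite pr_p_eq.
rewrite nedges_sum.
have hpu : forall w u, u \in [set w; p w; beta w; beta (p w)] ->
    (pr (p u) == pr (p w)) || (pr (p u) == pr w).
  move=> w u; rewrite !inE -!orbA => /or4P [] /eqP ->.
  - by rewrite eqxx.
  - by rewrite pK eqxx orbT.
  - by rewrite -beta_p pr_beta eqxx.
  - by rewrite -beta_p pK pr_beta eqxx orbT.
have hv : forall w v, v \in [set w; p w; beta w; beta (p w)] ->
    (pr v == pr w) || (pr v == pr (p w)).
  move=> w v; rewrite !inE -!orbA => /or4P [] /eqP ->.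
  - by rewrite eqxx.
  - by rewrite eqxx orbT.
  - by rewrite pr_beta eqxx.
  - by rewrite pr_beta eqxx orbT.
rewrite (eq_bigr (fun u => \sum_(v in [set y; p y; beta y; beta (p y)]) E1 u v)); last first.
  move=> u hu; apply: eq_bigr => v hv'; suff -> : e u v = E1 u v by []; apply: eE.
  case/orP: (hpu _ _ hu) => /eqP ->; case/orP: (hv _ _ hv') => /eqP -> //.
have [d1 d2 d3 d4] := dist4 (NA_pr hx).
have [d5 d6 d7 d8] := dist4 (NA_pr hy).
have b1 : x != beta x by rewrite eq_sym beta_neq.
have b2 : p x != beta x by rewrite eq_sym.
have b3 : p x != beta (p x) by rewrite eq_sym beta_neq.
have c1 : y != beta y by rewrite eq_sym beta_neq.
have c2 : p y != beta y by rewrite eq_sym.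
have c3 : p y != beta (p y) by rewrite eq_sym beta_neq.
rewrite (sum4 _ d1 b1 d2 b2 b3 d4).
rewrite !(sum4 _ d5 c1 d6 c2 c3 d8).
rewrite !E1_beta !E1_beta_r.
have h3 : pr (p (p x)) != pr y by rewrite pK.
have h4 : pr (p (p x)) != pr (p y) by rewrite pK.
rewrite (eE ne2) (eE ne4) (eE h3) (eE h4).
by case: (E1 x y); case: (E1 x (p y)); case: (E1 (p x) y); case: (E1 (p x) (p y)).
Qed.

Lemma keyD x y : pr x != pr y ->
  (e y (p x) + e x (p y) == 2) = (E1 x y != special e b x y).
Proof.
move=> ne; have D := D02 ne.
have nyx : y \notin pr x by rewrite -pr_eq.
have nxy : x \notin pr y by rewrite -pr_eq eq_sym.
case hx: (isA e b x).
  have -> : special e b x y = false by rewrite /special hx.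
  have -> : E1 x y = e x y.
    rewrite /E1 (pA hx); move: nyx; rewrite !inE negb_or => /andP [_ ->].
    by rewrite andbT.
  have ey : e y (p x) = e x y by rewrite (pA hx) esy A_adj.
  rewrite ey in D *.
  by move: D; case: (e x y); case: (e x (p y)); move=> /= [] H; try discriminate.
case hy: (isA e b y).
  have -> : special e b x y = false by rewrite /special hx hy.
  have -> : E1 x y = e x y.
    rewrite E1C /E1 (pA hy); move: nxy; rewrite !inE negb_or => /andP [_ ->].
    by rewrite andbT esy.
  have ey : e x (p y) = e x y by rewrite (pA hy) esy A_adj // esy.
  rewrite ey in D *.
  by move: D; case: (e x y); case: (e y (p x)); move=> /= [] H; try discriminate.
have hx' : ~~ isA e b x by rewrite hx.
have hy' : ~~ isA e b y by rewrite hy.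
case hxy: (y \in pr (p x)).
  have -> : special e b x y = false.
    by rewrite /special hx hy /= /xbpr -beta_p (pr_mem hxy) eqxx.
  move: D; rewrite !inE in hxy; case/orP: hxy => /eqP ->.
    by rewrite /E1 eqxx andbF eirr pK eirr.
  rewrite E1_beta_r /E1 eqxx andbF -beta_p pK.
  have -> : e x (beta x) = false by move: hx; rewrite /isA.
  by case: (e (beta (p x)) (p x)) => /= [] H.
have ne2 : pr (p x) != pr y by rewrite pr_eq hxy.
have ne3 : pr x != pr (p y) by rewrite -pr_p_eq pK.
have D' := D02 ne3; rewrite pK in D'.
rewrite /special hx hy /= /xbpr -!beta_p pr_eq hxy /= nedgesE //.
rewrite -(eE ne2) [e (p x) y]esy [e (p x) (p y)]esy.
move: D D'; case: (e x y); case: (e x (p y)); case: (e y (p x)); case: (e (p y) (p x)) => /=;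
  move=> [] H1 [] H2 //.
Qed.

Lemma main_stmt :
  [/\ 2 * #|V2 e k.-1| = #|T|,
      (forall P, P \in V2 e k.-1 -> 2 * deg2 e k.-1 P = k.-1),
      (forall Q R, Q \in V2 e k.-1 -> R \in V2 e k.-1 -> Q != R ->
          2 * cn2 e k.-1 Q R = a \/ 2 * cn2 e k.-1 Q R + 2 = a) &
      (forall x y : T,
          [set x; xb e k.-1 x] != [set y; xb e k.-1 y] ->
          let P := [set x; xb e k.-1 x] in
          let Q := [set y; xb e k.-1 y] in
          let c := cn2 e k.-1 P Q in
          if adj2 e k.-1 P Q then
            (if special e k.-1 x y then 2 * c = a else 2 * c + 2 = a)
          else
            (if special e k.-1 x y then 2 * c + 2 = a else 2 * c = a))].
Proof using esy eirr k1 reg cnab ub.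
split.
- exact: clause1.
- exact: clause2.
- move=> Q R /imsetP [x _ ->] /imsetP [y _ ->] ne.
  have H := cn2E ne.
  by case: (D02 ne) => HD; rewrite HD ?addn0 in H; auto.
- move=> x y ne; cbv zeta.
  rewrite adj2E ne /=.
  have H := cn2E ne; have K := keyD ne.
  case: (D02 ne) => HD; rewrite HD ?addn0 in H K;
  by case: (E1 x y) K; case: (special e b x y).
Qed.

End Proof.

Theorem lemma20 (T : finType) (e : rel T) (n k a : nat) :
  symmetric e -> irreflexive e ->
  #|T| = n -> 1 < k ->
  (forall x : T, #|[set y | e x y]| = k) ->
  a <= k.-1 ->
  (forall x y : T, x != y -> cn e x y = a \/ cn e x y = k.-1) ->
  (forall x : T, #|[set y | (y != x) && (cn e x y == k.-1)]| = 1) ->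
  [/\ 2 * #|V2 e k.-1| = n,
      (forall P, P \in V2 e k.-1 -> 2 * deg2 e k.-1 P = k.-1),
      (forall Q R, Q \in V2 e k.-1 -> R \in V2 e k.-1 -> Q != R ->
          2 * cn2 e k.-1 Q R = a \/ 2 * cn2 e k.-1 Q R + 2 = a) &
      (forall x y : T,
          [set x; xb e k.-1 x] != [set y; xb e k.-1 y] ->
          let P := [set x; xb e k.-1 x] in
          let Q := [set y; xb e k.-1 y] in
          let c := cn2 e k.-1 P Q in
          if adj2 e k.-1 P Q then
            (if special e k.-1 x y then 2 * c = a else 2 * c + 2 = a)
          else
            (if special e k.-1 x y then 2 * c + 2 = a else 2 * c = a))].
Proof.
move=> esy eirr hn k1 reg _ cnab ub; rewrite -hn.
exact: (main_stmt esy eirr k1 reg cnab ub).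
Qed.
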